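(* For every $n\in\mathbb{N}$, all nonempty chains $c_k,c_s$ over $[n]$ and all formulas $\varphi,\psi$: (i) if $c_s$ is a subchain of $c_k$, then $\vdash_{(n)}\neg_{c_k}\varphi\to_{(n)}(\neg_{c_s}\psi\to_{(n)}(\varphi\to_{(n)}\psi))$; (ii) if $c_k$ is a subchain of $c_s$, then $\vdash_{(n)}\neg_{c_k}\varphi\to_{(n)}(\neg_{c_s}\psi\to_{(n)}\neg_{c_k\otimes c_s}(\varphi\to_{(n)}\psi))$; (iii) if $c_k$ and $c_s$ have no symbols in common, then $\vdash_{(n)}\neg_{c_k}\varphi\to_{(n)}(\neg_{c_s}\psi\to_{(n)}\neg_{c_s}(\varphi\to_{(n)}\psi))$.
   Context: Fix $n\in\mathbb{N}$, $n\ge 1$, and write $[n]=\{1,\dots,n\}$. Chains: a chain over $[n]$ is a finite sequence of distinct elements of $[n]$; chains with the same length and the same symbols are identified, so a chain is effectively a subset of $[n]$. $c_k$ denotes a chain with $k$ symbols, $\epsilon$ the empty chain, and $(n)$ the chain consisting of all symbols of $[n]$. For chains $c,d$: the concatenation $c\cdot d$ is the chain of symbols occurring in $c$ or in $d$; the coconcatenation $c\otimes d$ is the chain of symbols occurring in exactly one of $c,d$; $d$ is a subchain of $c$ if every symbol of $d$ is a symbol of $c$. The complementary chain $c'_{n-k}$ of $c_k$ is the chain of the symbols of $[n]$ not occurring in $c_k$. Language of $\mathbf{CPN}_n$: a countable set $P_n$ of propositional letters; constants $\perp_c$ for each chain $c$ over $[n]$ with $1\le |c|\le n-1$, and constants $\perp_{(n)}$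 (contradiction) and $\top_{(n)}$ (truth); a unary connective $\neg_c$ for each nonempty chain $c$ over $[n]$ ($\neg_{(n)}$ is the strong negation; the $\neg_c$ with $|c|\le n-1$ are weak negations); a binary connective $\to_{(n)}$. Formulas: propositional letters and constants are formulas; if $\varphi,\psi$ are formulas then so are $\neg_c\varphi$ and $(\varphi\to_{(n)}\psi)$. Conventions: $\neg_\epsilon\varphi:=\varphi$, $\perp_\epsilon:=\top_{(n)}$, and $\perp_c$ for $c=(n)$ means $\perp_{(n)}$. Abbreviations: $\varphi\wedge_{(n)}\psi:=\neg_{(n)}(\varphi\to_{(n)}\neg_{(n)}\psi)$, $\varphi\vee_{(n)}\psi:=\neg_{(n)}\varphi\to_{(n)}\psi$, $\varphi\leftrightarrow_{(n)}\psi:=(\varphi\to_{(n)}\psi)\wedge_{(n)}(\psi\to_{(n)}\varphi)$. Axioms of $\mathbf{CPN}_n$, for all formulas $\varphi,\psi,\chi$ and all nonempty chains $c_k,c_r$ over $[n]$: (A1) $\varphi\to_{(n)}(\psi\to_{(n)}\varphi)$; (A2) $(\varphi\to_{(n)}(\psi\to_{(n)}\chi))\to_{(n)}((\varphi\to_{(n)}\psi)\to_{(n)}(\varphi\to_{(n)}\chi))$; (A3) $(\neg_{(n)}\psi\to_{(n)}\neg_{(n)}\varphi)\to_{(n)}((\neg_{(n)}\psi\to_{(n)}\varphi)\to_{(n)}\psi)$; (A4) $\varphi\to_{(n)}(\perp_{c_k}\to_{(n)}\neg_{c_k}\varphi)$; (A5) $\neg_{c_k}\neg_{c_r}\varphi\leftrightarrow_{(n)}\neg_{c_k\otimes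 c_r}\varphi$; (A6) $\neg_{c_k}\perp_{c_r}\leftrightarrow_{(n)}\perp_{c_k\otimes c_r}$; (A7) $\perp_{c_k}\to_{(n)}\perp_{c_r}$, whenever $c_r$ is a subchain of $c_k$. The only rule of inference is modus ponens (from $\varphi$ and $\varphi\to_{(n)}\psi$ infer $\psi$). For a set $\Sigma$ of formulas, $\Sigma\vdash_{(n)}\varphi$ means there is a finite sequence of formulas ending with $\varphi$, each of which is an axiom, a member of $\Sigma$, or obtained from two earlier members by modus ponens; $\vdash_{(n)}\varphi$ means $\emptyset\vdash_{(n)}\varphi$. *)

(* Defs.v *)
(* Chains over [n] are identified with subsets of 'I_n. *)
From mathcomp Require Import all_boot.
Set Implicit Arguments. Unset Strict Implicit. Unset Printing Implicit Defensive.

Section CPN.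
Variable n : nat.

Definition chain := {set 'I_n}.
Definition nechain := {c : chain | c != set0}.

(* Formulas of CPN_n.  Constants: Bot c for every chain c, where
   Bot set0 = top_(n), Bot setT = perp_(n), other c = perp_c. *)
Inductive form : Type :=
| Var of nat
| Bot of chain
| Neg of nechain & form
| Imp of form & form.

Definition negc (c : chain) (p : form) : form :=
  match insub c with Some c' => Neg c' p | None => p end.

Definition coconc (c d : chain) : chain := (c :\: d) :|: (d :\: c).

Definition sneg (p : form) : form := negc setT p.
Definition fand (p q : form) : form := sneg (Imp p (sneg q)).
Definition for_ (p q : form) : form := Imp (sneg p) q.
Definition fiff (p q : form) : form := fand (Imp p q) (Imp q p).

Inductive axiom : form -> Prop :=
| A1 p q : axiom (Imp p (Imp q p))
| A2 p q r : axiom (Imp (Imp p (Imp q r)) (Imp (Imp p q) (Imp p r)))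
| A3 p q : axiom (Imp (Imp (sneg q) (sneg p)) (Imp (Imp (sneg q) p) q))
| A4 p (ck : chain) : ck != set0 -> axiom (Imp p (Imp (Bot ck) (negc ck p)))
| A5 p (ck cr : chain) : ck != set0 -> cr != set0 ->
    axiom (fiff (negc ck (negc cr p)) (negc (coconc ck cr) p))
| A6 (ck cr : chain) : ck != set0 -> cr != set0 ->
    axiom (fiff (negc ck (Bot cr)) (Bot (coconc ck cr)))
| A7 (ck cr : chain) : ck != set0 -> cr != set0 -> cr \subset ck ->
    axiom (Imp (Bot ck) (Bot cr)).

Inductive derivable (Sigma : form -> Prop) : form -> Prop :=
| d_ax p : axiom p -> derivable Sigma p
| d_hyp p : Sigma p -> derivable Sigma p
| d_mp p q : derivable Sigma p -> derivable Sigma (Imp p q) -> derivable Sigma q.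

Definition provable (p : form) : Prop := derivable (fun _ => False) p.

End CPN.

(* Main.v *)
Require Import Defs.
From mathcomp Require Import all_boot.
Set Implicit Arguments. Unset Strict Implicit. Unset Printing Implicit Defensive.

Definition ext n (S : form n -> Prop) (p : form n) : form n -> Prop :=
  fun q => S q \/ q = p.

Lemma ax n (S : form n -> Prop) (p : form n) : axiom p -> derivable S p.
Proof. exact: d_ax. Qed.

Lemma mp n (S : form n -> Prop) (p q : form n) :
  derivable S (Imp p q) -> derivable S p -> derivable S q.
Proof. by move=> h1 h2; apply: d_mp h2 h1. Qed.

Lemma imp_refl n (S : form n -> Prop) (p : form n) : derivable S (Imp p p).
Proof.
apply: mp (ax _ (A1 p p)).
apply: mp (ax _ (A1 p (Imp p p))).
exact: ax _ (A2 p (Imp p p) p).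
Qed.

Lemma deduction n (S : form n -> Prop) (p q : form n) :
  derivable (ext S p) q -> derivable S (Imp p q).
Proof.
elim=> [r ar | r [hr | ->] | r s _ ih1 _ ih2].
- apply: mp (ax _ ar). exact: ax _ (A1 r p).
- apply: mp (d_hyp hr). exact: ax _ (A1 r p).
- exact: imp_refl.
- apply: mp ih1. apply: mp ih2. exact: ax _ (A2 p r s).
Qed.

Lemma weaken n (S S' : form n -> Prop) p :
  (forall q, S q -> S' q) -> derivable S p -> derivable S' p.
Proof.
move=> h; elim=> [r ar|r hr|r s _ h1 _ h2].
- exact: d_ax. - exact: d_hyp (h _ hr). - exact: d_mp h1 h2.
Qed.

Lemma wk n (S : form n -> Prop) (p q : form n) :
  derivable S q -> derivable (ext S p) q.
Proof. apply: weaken => r hr; by left. Qed.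

Lemma hyp0 n (S : form n -> Prop) (p : form n) : derivable (ext S p) p.
Proof. by apply: d_hyp; right. Qed.

Ltac hyp := apply: d_hyp; rewrite /ext; repeat first [by right | left].

Lemma efq n (S : form n -> Prop) (p q : form n) :
  derivable S p -> derivable S (sneg p) -> derivable S q.
Proof.
move=> hp hnp.
have h1 : derivable S (Imp (sneg q) (sneg p)).
  apply: mp hnp. exact: ax _ (A1 _ _).
have h2 : derivable S (Imp (sneg q) p).
  apply: mp hp. exact: ax _ (A1 _ _).
exact: mp (mp (ax _ (A3 p q)) h1) h2.
Qed.

Lemma raa n (S : form n -> Prop) (p q : form n) :
  derivable (ext S (sneg q)) p -> derivable (ext S (sneg q)) (sneg p) ->
  derivable S q.
Proof.
move=> h1 h2. exact: mp (mp (ax _ (A3 p q)) (deduction h2)) (deduction h1).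
Qed.

Lemma dne n (S : form n -> Prop) (q : form n) :
  derivable S (sneg (sneg q)) -> derivable S q.
Proof. move=> h. apply: (@raa _ _ (sneg q)); [exact: hyp0 | exact: wk h]. Qed.

Lemma nintro n (S : form n -> Prop) (p r : form n) :
  derivable (ext S p) r -> derivable (ext S p) (sneg r) -> derivable S (sneg p).
Proof.
move=> h1 h2. apply: (@raa _ _ r).
- exact: mp (wk _ (deduction h1)) (dne (hyp0 _ _)).
- exact: mp (wk _ (deduction h2)) (dne (hyp0 _ _)).
Qed.

Lemma cases n (S : form n -> Prop) (p q : form n) :
  derivable (ext S p) q -> derivable (ext S (sneg p)) q -> derivable S q.
Proof.
move=> h1 h2.
have A := deduction h1. have B := deduction h2.
apply: (@raa _ _ q); last exact: hyp0.
apply: mp (wk _ B) _.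
apply: (@nintro _ _ _ q); last by hyp.
exact: mp (wk _ (wk _ A)) (hyp0 _ _).
Qed.

Lemma fand_l n (S : form n -> Prop) (a b : form n) :
  derivable S (fand a b) -> derivable S a.
Proof.
move=> h. apply: (@raa _ _ (Imp a (sneg b))); last exact: wk h.
apply: deduction. apply: (@efq _ _ a); [exact: hyp0 | hyp].
Qed.

Lemma fand_r n (S : form n -> Prop) (a b : form n) :
  derivable S (fand a b) -> derivable S b.
Proof.
move=> h. apply: (@raa _ _ (Imp a (sneg b))); last exact: wk h.
apply: deduction. hyp.
Qed.

Lemma fiff_l n (S : form n -> Prop) (a b : form n) :
  derivable S (fiff a b) -> derivable S (Imp a b).
Proof. exact: fand_l. Qed.

Lemma fiff_r n (S : form n -> Prop) (a b : form n) :
  derivable S (fiff a b) -> derivable S (Imp b a).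
Proof. exact: fand_r. Qed.

Lemma negimp n (S : form n -> Prop) (p q : form n) :
  derivable S p -> derivable S (sneg q) -> derivable S (sneg (Imp p q)).
Proof.
move=> hp hq. apply: (@nintro _ _ _ q); last exact: wk hq.
exact: mp (hyp0 _ _) (wk _ hp).
Qed.

Lemma imp_np n (S : form n -> Prop) (p q : form n) :
  derivable S (sneg p) -> derivable S (Imp p q).
Proof.
move=> h. apply: deduction. apply: (@efq _ _ p); [exact: hyp0 | exact: wk h].
Qed.

Lemma imp_q n (S : form n -> Prop) (p q : form n) :
  derivable S q -> derivable S (Imp p q).
Proof. move=> h. exact: mp (ax _ (A1 q p)) h. Qed.

Lemma negc0 n (p : form n) : negc set0 p = p.
Proof. by rewrite /negc insubN ?eqxx. Qed.

Lemma coconc_self n (c : chain n) : coconc c c = set0.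
Proof. by rewrite /coconc setDv setU0. Qed.

Lemma coconcT n (c : chain n) : coconc setT c = ~: c.
Proof. apply/setP => x; rewrite /coconc !inE; by case: (x \in c). Qed.

Lemma setT_ne n (hn : 0 < n) : (setT : chain n) != set0.
Proof. apply/set0Pn; exists (Ordinal hn); by rewrite inE. Qed.

Lemma L1a n (S : form n -> Prop) (c : chain n) X :
  derivable S (Bot c) -> derivable S X -> derivable S (negc c X).
Proof.
move=> hB hX. have [->|hc] := eqVneq c set0; first by rewrite negc0.
exact: mp (mp (ax _ (A4 X hc)) hX) hB.
Qed.

Lemma L1b n (S : form n -> Prop) (c : chain n) X :
  derivable S (Bot c) -> derivable S (negc c X) -> derivable S X.
Proof.
move=> hB hX. have [e|hc] := eqVneq c set0; first by rewrite e negc0 in hX.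
have h := mp (mp (ax _ (A4 (negc c X) hc)) hX) hB.
have h2 := fiff_l (ax S (A5 X hc hc)).
rewrite coconc_self negc0 in h2.
exact: mp h2 h.
Qed.

Lemma L2a n (hn : 0 < n) (S : form n -> Prop) (c : chain n) X :
  c != set0 ->
  derivable S (sneg (Bot c)) -> derivable S (negc c X) -> derivable S (sneg X).
Proof.
move=> hc hB hX. have hT := setT_ne hn.
have hB' := mp (fiff_l (ax S (A6 hT hc))) hB.
apply: (@nintro _ _ _ (negc c X)); first exact: wk hX.
apply: mp (fiff_r (ax _ (A5 X hT hc))) _.
apply: L1a; [exact: wk hB' | exact: hyp0].
Qed.

Lemma L2b n (hn : 0 < n) (S : form n -> Prop) (c : chain n) X :
  c != set0 ->
  derivable S (sneg (Bot c)) -> derivable S (sneg X) -> derivable S (negc c X).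
Proof.
move=> hc hB hX. have hT := setT_ne hn.
have hB' := mp (fiff_l (ax S (A6 hT hc))) hB.
apply: (@raa _ _ X); last exact: wk hX.
apply: (L1b (wk _ hB')).
exact: mp (fiff_l (ax _ (A5 X hT hc))) (hyp0 _ _).
Qed.

Lemma B1 n (S : form n -> Prop) (k s : chain n) :
  k != set0 -> s != set0 -> s \subset k ->
  derivable S (Bot k) -> derivable S (Bot s).
Proof. move=> hk hs hsk h. exact: mp (ax _ (A7 hk hs hsk)) h. Qed.

Lemma B2 n (hn : 0 < n) (S : form n -> Prop) (k d : chain n) :
  k != set0 -> d != set0 -> d \subset ~: k ->
  derivable S (sneg (Bot k)) -> derivable S (Bot d).
Proof.
move=> hk hd hdk h. have hT := setT_ne hn.
have hB' := mp (fiff_l (ax S (A6 hT hk))) h.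
rewrite coconcT in hB'.
have hk' : ~: k != set0.
  apply: contraNneq hd => e; apply/eqP; apply/setP => x.
  rewrite inE; apply/negP => hx; have := subsetP hdk x hx; by rewrite e inE.
exact: B1 hk' hd hdk hB'.
Qed.

Lemma B3 n (S : form n -> Prop) (k d : chain n) :
  k != set0 -> d != set0 ->
  derivable S (Bot k) -> derivable S (Bot d) -> derivable S (Bot (coconc k d)).
Proof.
move=> hk hd h1 h2. apply: mp (fiff_l (ax S (A6 hk hd))) _.
exact: L1a h1 h2.
Qed.

Theorem mainTheorem8 (n : nat) (hn : 0 < n) (ck cs : chain n)
    (hk : ck != set0) (hs : cs != set0) (phi psi : form n) :
  [/\ cs \subset ck ->
        provable (Imp (negc ck phi) (Imp (negc cs psi) (Imp phi psi))),
      ck \subset cs ->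
        provable (Imp (negc ck phi) (Imp (negc cs psi)
                   (negc (coconc ck cs) (Imp phi psi))))
    & [disjoint ck & cs] ->
        provable (Imp (negc ck phi) (Imp (negc cs psi) (negc cs (Imp phi psi))))].
Proof.
split.
- move=> hsk. rewrite /provable. do 3 apply: deduction.
  apply: (@cases _ _ (Bot ck)).
  + apply: L1b (B1 hk hs hsk (hyp0 _ _)) _. hyp.
  + apply: (@efq _ _ phi); first by hyp.
    apply: (L2a hn hk (hyp0 _ _)). hyp.
- move=> hks. rewrite /provable. do 2 apply: deduction.
  set d := coconc ck cs.
  have hdsub : d \subset cs.
    apply/subsetP => x; rewrite /d /coconc !inE.
    have := subsetP hks x; case: (x \in ck); case: (x \in cs) => //= h; by case: h.
  have hdk : d \subset ~: ck.
    apply/subsetP => x; rewrite /d /coconc !inE.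
    have := subsetP hks x; case: (x \in ck); case: (x \in cs) => //= h; by case: h.
  have hkd : coconc ck d = cs.
    apply/setP => x; rewrite /d /coconc !inE.
    have := subsetP hks x; case: (x \in ck); case: (x \in cs) => //= h; by case: h.
  apply: (@cases _ _ (Bot cs)).
  + have hBk := B1 hs hk hks (hyp0 _ _).
    match goal with |- derivable ?S _ => have hpsi : derivable S psi end.
      by apply: L1b (hyp0 _ _) _; hyp.
    have [->|hd] := eqVneq d set0; first by rewrite negc0; exact: imp_q.
    apply: L1a (B1 hs hd hdsub (hyp0 _ _)) _. exact: imp_q.
  + apply: (@cases _ _ (Bot ck)).
    * match goal with |- derivable ?S _ => have hphi : derivable S phi end.
      by apply: L1b (hyp0 _ _) _; hyp.
      match goal with |- derivable ?S _ => have hnpsi : derivable S (sneg psi) end.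
        apply: (L2a hn hs); hyp.
      have [e|hd] := eqVneq d set0.
        have e2 : ck = cs by rewrite -hkd e /coconc setD0 set0D setU0.
        apply: (@efq _ _ (Bot cs)); last by hyp.
        rewrite -e2; exact: hyp0.
      apply: (L2b hn hd); last exact: negimp hphi hnpsi.
      apply: (@nintro _ _ _ (Bot cs)); last by hyp.
      rewrite -hkd. apply: B3 hk hd _ (hyp0 _ _). hyp.
    * match goal with |- derivable ?S _ => have hnphi : derivable S (sneg phi) end.
        apply: (L2a hn hk); hyp.
      have [->|hd] := eqVneq d set0; first by rewrite negc0; exact: imp_np.
      apply: L1a (B2 hn hk hd hdk (hyp0 _ _)) _. exact: imp_np.
- move=> hdis. rewrite /provable. do 2 apply: deduction.
  have hsk : cs \subset ~: ck.
    apply/subsetP => x hx; rewrite inE; apply/negP => hx'.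
    by have := disjointFr hdis hx'; rewrite hx.
  apply: (@cases _ _ (Bot ck)).
  + match goal with |- derivable ?S _ => have hphi : derivable S phi end.
    by apply: L1b (hyp0 _ _) _; hyp.
    apply: (@cases _ _ (Bot cs)).
    * apply: L1a (hyp0 _ _) _. apply: imp_q. apply: L1b (hyp0 _ _) _; hyp.
    * apply: (L2b hn hs (hyp0 _ _)). apply: negimp; first exact: wk hphi.
      apply: (L2a hn hs (hyp0 _ _)); hyp.
  + match goal with |- derivable ?S _ => have hnphi : derivable S (sneg phi) end.
      apply: (L2a hn hk); hyp.
    apply: L1a (B2 hn hk hs hsk (hyp0 _ _)) _. exact: imp_np.
Qed.
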